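(* Let $L$ be a localization functor on the category of abelian groups, let $D$ be an abelian group and let $\lambda$ be an infinite cardinal. If $D^\kappa_{<\lambda}$ is $L$-local for some cardinal $\kappa\geq\lambda$, then $D^\alpha_{<\lambda}$ is $L$-local for every cardinal $\alpha\geq\lambda$.
   Context: All groups are abelian. A localization is a functor $L:\mathcal{Ab}\to\mathcal{Ab}$ with a natural transformation $a:\mathrm{Id}\to L$ such that for every group $X$ we have $a_{LX}=La_X$ and $a_{LX}:LX\to LLX$ is an isomorphism. A group $X$ is $L$-local if $a_X$ is an isomorphism; a homomorphism $f$ is an $L$-equivalence if $Lf$ is an isomorphism. For cardinals $\kappa\geq\lambda$ with $\lambda$ infinite, $D^\kappa_{<\lambda}$ denotes the subgroup of $\prod_\kappa D$ consisting of those elements whose support has cardinality less than $\lambda$. *)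

(* Defs.v *)
From Stdlib Require Import Classical FunctionalExtensionality ProofIrrelevance.

Set Implicit Arguments.

Record AbGroup := mkAb {
  carrier :> Type;
  zero : carrier;
  add : carrier -> carrier -> carrier;
  opp : carrier -> carrier;
  addA : forall x y z, add x (add y z) = add (add x y) z;
  addC : forall x y, add x y = add y x;
  add0 : forall x, add zero x = x;
  addN : forall x, add (opp x) x = zero }.
Arguments zero {_}.
Arguments add {_} _ _.
Arguments opp {_} _.
Arguments addA {_} _ _ _.
Arguments addC {_} _ _.
Arguments add0 {_} _.
Arguments addN {_} _.

Record hom (A B : AbGroup) := mkHom {
  hfun :> A -> B;
  hom_add : forall x y, hfun (add x y) = add (hfun x) (hfun y) }.

Definition id_hom (A : AbGroup) : hom A A := @mkHom A A (fun x => x) (fun x y => eq_refl).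

Definition comp_hom (A B C : AbGroup) (g : hom B C) (f : hom A B) : hom A C.
Proof.
  refine (@mkHom A C (fun x => g (f x)) _).
  intros x y; rewrite (hom_add f), (hom_add g); reflexivity.
Defined.

Definition hom_eq (A B : AbGroup) (f g : hom A B) : Prop := forall x, f x = g x.

Definition is_iso (A B : AbGroup) (f : hom A B) : Prop :=
  exists g : hom B A, hom_eq (comp_hom g f) (id_hom A) /\ hom_eq (comp_hom f g) (id_hom B).

Record Localization := {
  Lobj : AbGroup -> AbGroup;
  Lmap : forall A B : AbGroup, hom A B -> hom (Lobj A) (Lobj B);
  Lmap_ext : forall A B (f g : hom A B), hom_eq f g -> hom_eq (Lmap f) (Lmap g);
  Lmap_id : forall A, hom_eq (Lmap (id_hom A)) (id_hom (Lobj A));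
  Lmap_comp : forall A B C (f : hom A B) (g : hom B C),
      hom_eq (Lmap (comp_hom g f)) (comp_hom (Lmap g) (Lmap f));
  unit : forall A : AbGroup, hom A (Lobj A);
  unit_nat : forall A B (f : hom A B),
      hom_eq (comp_hom (Lmap f) (unit A)) (comp_hom (unit B) f);
  unit_L : forall A, hom_eq (unit (Lobj A)) (Lmap (unit A));
  unit_L_iso : forall A, is_iso (unit (Lobj A)) }.

Definition is_local (L : Localization) (X : AbGroup) : Prop := is_iso (unit L X).

(** * Cardinals (represented by types) *)
Definition card_le (A B : Type) : Prop := exists f : A -> B, forall x y, f x = f y -> x = y.
Definition card_lt (A B : Type) : Prop := card_le A B /\ ~ card_le B A.
Definition infinite (A : Type) : Prop := ~ exists n : nat, card_le A {i : nat | i < n}.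

Definition support (D : AbGroup) (K : Type) (f : K -> carrier D) : Type := {i : K | f i <> zero}.
Definition small_supp (D : AbGroup) (K lam : Type) (f : K -> D) : Prop :=
  card_lt (@support D K f) lam.
Arguments support {D K} f.
Arguments small_supp {D K} lam f.

(** The set of elements of support < lambda is closed under addition
   (true for infinite lambda under ZFC; taken as a hypothesis). *)
Definition supp_add_closed (D : AbGroup) (K lam : Type) : Prop :=
  forall f g : K -> D, small_supp lam f -> small_supp lam g ->
    small_supp lam (fun i => add (f i) (g i)).

Lemma opp_eq0 (D : AbGroup) (x : D) : opp x = zero -> x = zero.
Proof.
  intro H. transitivity (add (opp x) x).
  - rewrite H. symmetry. apply add0.
  - apply addN.
Qed.

Lemma small_zero (D : AbGroup) (K lam : Type) :
  infinite lam -> small_supp lam (fun _ : K => (zero : D)).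
Proof.
  intro Hinf. split.
  - exists (fun s : support (fun _ : K => (zero : D)) =>
              match proj2_sig s eq_refl return lam with end).
    intros [x Hx]; destruct (Hx eq_refl).
  - intros [g _]. apply Hinf. exists 0.
    exists (fun l => match proj2_sig (g l) eq_refl with end).
    intros x; destruct (proj2_sig (g x) eq_refl).
Qed.

Lemma opp0 (D : AbGroup) : opp (zero : D) = zero.
Proof. rewrite <- (add0 (opp (zero : D))), addC. apply addN. Qed.

Lemma small_opp (D : AbGroup) (K lam : Type) (f : K -> D) :
  small_supp lam f -> small_supp lam (fun i => opp (f i)).
Proof.
  intros [[h hi] hn].
  assert (F1 : forall i, opp (f i) <> zero -> f i <> zero).
  { intros i Hi E; apply Hi; rewrite E; apply opp0. }
  assert (F2 : forall i, f i <> zero -> opp (f i) <> zero).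
  { intros i Hi E; apply Hi; apply opp_eq0; exact E. }
  split.
  - exists (fun s : support (fun i => opp (f i)) =>
       h (exist _ (proj1_sig s) (F1 _ (proj2_sig s)))).
    intros [x Hx] [y Hy] E. apply hi in E. injection E as E'. subst y.
    f_equal; apply proof_irrelevance.
  - intros [g gi]. apply hn.
    exists (fun l => let s := g l in
              exist (fun i => f i <> zero) (proj1_sig s) (F1 _ (proj2_sig s))).
    intros x y E. apply gi. injection E as E'.
    destruct (g x) as [a Ha], (g y) as [b Hb]; simpl in *; subst b.
    f_equal; apply proof_irrelevance.
Qed.

Section Dsmall.
Variables (D : AbGroup) (K lam : Type) (Hinf : infinite lam)
          (Hcl : supp_add_closed D K lam).

Definition Dcar : Type := {f : K -> D | small_supp lam f}.
Definition Dzero : Dcar := exist _ (fun _ => zero) (@small_zero D K lam Hinf).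
Definition Dadd (f g : Dcar) : Dcar :=
  exist _ (fun i => add (proj1_sig f i) (proj1_sig g i))
        (Hcl (proj2_sig f) (proj2_sig g)).
Definition Dopp (f : Dcar) : Dcar :=
  exist _ (fun i => opp (proj1_sig f i)) (small_opp (proj2_sig f)).

Lemma Dcar_ext (f g : Dcar) : (forall i, proj1_sig f i = proj1_sig g i) -> f = g.
Proof.
  destruct f as [f Hf], g as [g Hg]; simpl; intro E.
  apply functional_extensionality in E; subst g.
  f_equal; apply proof_irrelevance.
Qed.

Definition Dsmall : AbGroup.
Proof.
  refine (@mkAb Dcar Dzero Dadd Dopp _ _ _ _);
    intros; apply Dcar_ext; intro i; simpl.
  - apply addA.
  - apply addC.
  - apply add0.
  - apply addN.
Defined.
End Dsmall.
Arguments Dsmall : clear implicits.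

(* Main.v *)
Require Import Defs.
From Stdlib Require Import Classical ClassicalEpsilon FunctionalExtensionality PropExtensionality ProofIrrelevance.

Section BW.
Variables (T : Type) (le : T -> T -> Prop).
Hypotheses (le_refl : forall x, le x x)
  (le_trans : forall x y z, le x y -> le y z -> le x z)
  (le_antisym : forall x y, le x y -> le y x -> x = y).
Definition chain (C : T -> Prop) := forall x y, C x -> C y -> le x y \/ le y x.
Variable sup : forall C, chain C -> T.
Hypotheses (sup_ub : forall C (H : chain C) x, C x -> le x (sup C H))
  (sup_least : forall C (H : chain C) u, (forall x, C x -> le x u) -> le (sup C H) u).
Variable f : T -> T.
Hypothesis f_infl : forall x, le x (f x).

Definition tower (M : T -> Prop) := (forall x, M x -> M (f x)) /\
  (forall C (H : chain C), (forall x, C x -> M x) -> M (sup C H)).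
Definition Min x := forall M, tower M -> M x.
Lemma Min_tower : tower Min.
Proof.
  split.
  - intros x Hx M HM. apply (proj1 HM), Hx, HM.
  - intros C H HC M HM. apply (proj2 HM). intros x Cx; apply HC; auto.
Qed.
Lemma Min_sub M : tower M -> forall x, Min x -> M x.
Proof. intros HM x Hx; apply Hx, HM. Qed.

Definition extreme c := forall x, Min x -> le x c -> x <> c -> le (f x) c.

Lemma ext_lemma c : Min c -> extreme c -> forall x, Min x -> le x c \/ le (f c) x.
Proof.
  intros Mc Ec x Mx.
  cut (Min x /\ (le x c \/ le (f c) x)). { tauto. }
  revert x Mx.
  refine (Min_sub (fun x => Min x /\ (le x c \/ le (f c) x)) _).
  split; cbv beta.
  - intros x [Mx [H|H]]; (split; [apply (proj1 Min_tower); auto|]).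
    + destruct (classic (x = c)) as [->|N]. { right; apply le_refl. } left; apply Ec; auto.
    + right. eapply le_trans; [exact H| apply f_infl].
  - intros C H HC. split. apply (proj2 Min_tower). intros; apply HC; auto.
    destruct (classic (exists x, C x /\ le (f c) x)) as [[x [Cx Hx]]|N].
    + right. eapply le_trans; [exact Hx| apply sup_ub; auto].
    + left. apply sup_least. intros x Cx. destruct (proj2 (HC x Cx)) as [h|h]; auto.
      exfalso; apply N; eauto.
Qed.

Lemma ext_tower : tower (fun c => Min c /\ extreme c).
Proof.
  split; cbv beta.
  - intros c [Mc Ec]. split. apply (proj1 Min_tower); auto.
    intros x Mx Hle Hne. destruct (ext_lemma _ Mc Ec _ Mx) as [H|H].
    + destruct (classic (x = c)) as [->|N]. apply le_refl.
      eapply le_trans. apply Ec; auto. apply f_infl.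
    + exfalso. apply Hne. apply le_antisym; auto.
  - intros C H HC. assert (Ms: Min (sup C H)).
    { apply (proj2 Min_tower); intros; apply HC; auto. }
    split; auto. intros x Mx Hle Hne.
    destruct (classic (exists c, C c /\ ~ le (f c) x)) as [[c [Cc Hc]]|N].
    + destruct (HC c Cc) as [Mc Ec]. destruct (ext_lemma _ Mc Ec _ Mx) as [Hxc|Hxc]; [|contradiction].
      destruct (classic (x = c)) as [->|N2].
      * destruct (ext_lemma _ Mc Ec _ Ms) as [Hsc|Hsc]; auto.
        exfalso; apply Hne; apply le_antisym; auto.
      * eapply le_trans. apply Ec; auto. apply sup_ub; auto.
    + exfalso. apply Hne. apply le_antisym; auto. apply sup_least. intros c Cc.
      destruct (classic (le (f c) x)) as [h|h].
      * eapply le_trans; [apply f_infl|exact h].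
      * exfalso; apply N; eauto.
Qed.

Lemma Min_chain : chain Min.
Proof.
  intros x y Mx My. destruct (Min_sub _ ext_tower _ My) as [_ Ey].
  destruct (ext_lemma _ My Ey _ Mx) as [h|h]; [left; auto|right].
  eapply le_trans; [apply f_infl|exact h].
Qed.

Theorem BW_fix : exists x, f x = x.
Proof.
  exists (sup Min Min_chain). apply le_antisym.
  - apply sup_ub. apply (proj1 Min_tower). apply (proj2 Min_tower); auto.
  - apply f_infl.
Qed.
End BW.

Section Comp.
Variables A B : Type.
Record pinj := { rel : A -> B -> Prop;
  rfun : forall a b b', rel a b -> rel a b' -> b = b';
  rinj : forall a a' b, rel a b -> rel a' b -> a = a' }.
Definition ple (R S : pinj) := forall a b, rel R a b -> rel S a b.

Lemma ple_antisym R S : ple R S -> ple S R -> R = S.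
Proof.
  destruct R as [r1 f1 i1], S as [r2 f2 i2]; unfold ple; simpl; intros H1 H2.
  assert (r1 = r2).
  { extensionality a; extensionality b; apply propositional_extensionality; split; auto. }
  subst r2. f_equal; apply proof_irrelevance.
Qed.

Definition psup (C : pinj -> Prop) (H : chain pinj ple C) : pinj.
Proof.
  refine {| rel := fun a b => exists R, C R /\ rel R a b |}.
  - intros a b b' [R1 [C1 H1]] [R2 [C2 H2]].
    destruct (H R1 R2 C1 C2) as [h|h].
    + apply (rfun R2 a); auto.
    + apply (rfun R1 a); auto.
  - intros a a' b [R1 [C1 H1]] [R2 [C2 H2]].
    destruct (H R1 R2 C1 C2) as [h|h].
    + apply (rinj R2 a a' b); auto.
    + apply (rinj R1 a a' b); auto.
Defined.

Definition pnext (R : pinj) : pinj :=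
  match excluded_middle_informative (exists S, ple R S /\ S <> R) with
  | left H => proj1_sig (constructive_indefinite_description _ H)
  | right _ => R end.

Lemma comparability : card_le A B \/ card_le B A.
Proof.
  assert (Hinfl : forall x, ple x (pnext x)).
  { intros x. unfold pnext. destruct excluded_middle_informative as [h|h].
    - exact (proj1 (proj2_sig (constructive_indefinite_description _ h))).
    - intros a b; auto. }
  destruct (@BW_fix pinj ple (fun R a b h => h)
     (fun R S T h1 h2 a b h => h2 _ _ (h1 _ _ h)) ple_antisym psup
     (fun C H x Cx a b h => ex_intro _ x (conj Cx h))
     (fun C H u Hu a b => fun '(ex_intro _ R (conj CR h)) => Hu R CR a b h)
     pnext Hinfl) as [R HR].
  assert (Hmax : forall S, ple R S -> S = R).
  { intros S HS. apply NNPP; intro N. unfold pnext in HR.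
    destruct excluded_middle_informative as [h|h].
    - destruct (proj2_sig (constructive_indefinite_description _ h)) as [_ h2]. auto.
    - apply h; eauto. }
  destruct (classic (forall a, exists b, rel R a b)) as [Ht|Ht].
  { left. exists (fun a => proj1_sig (constructive_indefinite_description _ (Ht a))).
    intros x y E. apply (rinj R x y (proj1_sig (constructive_indefinite_description _ (Ht x)))).
    - apply proj2_sig.
    - rewrite E; apply proj2_sig. }
  destruct (classic (forall b, exists a, rel R a b)) as [Hs|Hs].
  { right. exists (fun b => proj1_sig (constructive_indefinite_description _ (Hs b))).
    intros x y E. apply (rfun R (proj1_sig (constructive_indefinite_description _ (Hs x)))).
    - apply proj2_sig.
    - rewrite E; apply proj2_sig. }
  exfalso.
  destruct (not_all_ex_not _ _ Ht) as [a0 Ha0].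
  destruct (not_all_ex_not _ _ Hs) as [b0 Hb0].
  assert (F : forall a a' b b', rel R a b -> rel R a' b' \/ (a' = a0 /\ b' = b0) ->
      (a = a' <-> b = b')).
  { intros a a' b b' H1 [H2|[-> ->]].
    - split; intro E; subst. apply (rfun R a'); auto. apply (rinj R a a' b'); auto.
    - split; intro E; subst; exfalso; eauto. }
  pose (S := {| rel := fun a b => rel R a b \/ (a = a0 /\ b = b0);
     rfun := fun a b b' h1 h2 => match h1, h2 with
       | or_introl x, _ => proj1 (F a a b b' x h2) eq_refl
       | _, or_introl y => eq_sym (proj1 (F a a b' b y h1) eq_refl)
       | or_intror (conj e1 e2), or_intror (conj e3 e4) => eq_trans e2 (eq_sym e4) end;
     rinj := fun a a' b h1 h2 => match h1, h2 with
       | or_introl x, _ => proj2 (F a a' b b x h2) eq_refl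
       | _, or_introl y => eq_sym (proj2 (F a' a b b y h1) eq_refl)
       | or_intror (conj e1 e2), or_intror (conj e3 e4) => eq_trans e1 (eq_sym e3) end |}).
  assert (E : S = R) by (apply Hmax; intros a b h; left; exact h).
  assert (H0 : rel S a0 b0) by (right; auto).
  rewrite E in H0. eauto.
Qed.
End Comp.
Set Implicit Arguments.

Section Cat.
Variable L : Localization.

Lemma iso_inj (A B : AbGroup) (f : hom A B) : is_iso f -> forall x y, f x = f y -> x = y.
Proof.
  intros [g [H1 H2]] x y E. transitivity (g (f x)).
  - symmetry; exact (H1 x).
  - rewrite E; exact (H1 y).
Qed.

Lemma Lcomp (X Y Z : AbGroup) (f : hom X Y) (g : hom Y Z) z :
  Lmap L (comp_hom g f) z = Lmap L g (Lmap L f z).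
Proof. exact (Lmap_comp L f g z). Qed.
Lemma Lnat (X Y : AbGroup) (f : hom X Y) x : Lmap L f (unit L X x) = unit L Y (f x).
Proof. exact (unit_nat L f x). Qed.

Lemma ext_unique (X Y : AbGroup) (HY : is_local L Y) (h h' : hom (Lobj L X) Y) :
  (forall x, h (unit L X x) = h' (unit L X x)) -> forall z, h z = h' z.
Proof.
  intros E z. apply (iso_inj HY).
  rewrite <- !Lnat. rewrite (unit_L L X z). rewrite <- !Lcomp.
  apply (Lmap_ext L). intro x. exact (E x).
Qed.

Definition inv_of (A B : AbGroup) (f : hom A B) (H : is_iso f) : hom B A :=
  proj1_sig (constructive_indefinite_description _ H).
Lemma inv_l (A B : AbGroup) (f : hom A B) (H : is_iso f) x : inv_of H (f x) = x.
Proof. unfold inv_of. destruct constructive_indefinite_description as [g [H1 H2]]. exact (H1 x). Qed.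
Lemma inv_r (A B : AbGroup) (f : hom A B) (H : is_iso f) y : f (inv_of H y) = y.
Proof. unfold inv_of. destruct constructive_indefinite_description as [g [H1 H2]]. exact (H2 y). Qed.

Lemma local_of_linv (X : AbGroup) (g : hom (Lobj L X) X) :
  (forall x, g (unit L X x) = x) -> is_local L X.
Proof.
  intro Hg. exists g. split.
  - intro x. exact (Hg x).
  - intro z. exact (@ext_unique X (Lobj L X) (unit_L_iso L X) (comp_hom (unit L X) g) (id_hom _)
      (fun x => f_equal (unit L X) (Hg x)) z).
Qed.

Lemma local_retract (X Y : AbGroup) (HY : is_local L Y) (i : hom X Y) (r : hom Y X) :
  (forall x, r (i x) = x) -> is_local L X.
Proof.
  intro H. apply (local_of_linv (comp_hom r (comp_hom (inv_of HY) (Lmap L i)))).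
  intro x. simpl. rewrite Lnat, inv_l. apply H.
Qed.

Lemma inv_nat (Y : AbGroup) (HY : is_local L Y) (m : hom Y Y) eta :
  m (inv_of HY eta) = inv_of HY (Lmap L m eta).
Proof.
  apply (iso_inj HY). rewrite (inv_r HY (Lmap L m eta)). rewrite <- Lnat. rewrite inv_r. reflexivity.
Qed.
End Cat.

Lemma card_le_of (S1 S2 : Type) (P : S1 -> S2 -> Prop) :
  (forall s, exists t, P s t) -> (forall s s' t, P s t -> P s' t -> s = s') -> card_le S1 S2.
Proof.
  intros H H2. exists (fun s => proj1_sig (constructive_indefinite_description _ (H s))).
  intros x y E. apply (H2 x y (proj1_sig (constructive_indefinite_description _ (H x)))).
  - apply proj2_sig.
  - rewrite E; apply proj2_sig.
Qed.

Lemma sig_eq (T : Type) (P : T -> Prop) (s s' : {x | P x}) : proj1_sig s = proj1_sig s' -> s = s'.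
Proof. destruct s, s'; simpl; intro; subst; f_equal; apply proof_irrelevance. Qed.

Section Grp.
Variables (D : AbGroup) (lam : Type) (Hinf : infinite lam)
  (Hcl : forall alpha : Type, supp_add_closed D alpha lam).

Notation XX K := (Dsmall D K lam Hinf (@Hcl K)).

Lemma small_mono (K1 K2 : Type) (f : K1 -> D) (g : K2 -> D) :
  card_le (support g) (support f) -> small_supp lam f -> small_supp lam g.
Proof.
  intros [h hi] [[k ki] kn]. split.
  - exists (fun s => k (h s)); intros; apply hi, ki; auto.
  - intros [u ui]. apply kn. exists (fun l => h (u l)). intros; apply ui, hi; auto.
Qed.

Lemma Xext (a : Type) (f g : XX a) : (forall i, proj1_sig f i = proj1_sig g i) -> f = g.
Proof. apply Dcar_ext. Qed.

Section Res.
Variables (K1 K2 : Type) (e : K1 -> K2) (ei : forall x y, e x = e y -> x = y).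

Definition res_fun (f : XX K2) : XX K1.
Proof.
  refine (exist _ (fun i => proj1_sig f (e i)) _).
  refine (small_mono _ (proj2_sig f)).
  apply (card_le_of (fun s t => e (proj1_sig s) = proj1_sig t)).
  - intros [s Hs]. exists (exist _ (e s) Hs). reflexivity.
  - intros s s' t H1 H2. apply sig_eq. apply ei. congruence.
Defined.

Definition res : hom (XX K2) (XX K1).
Proof. refine (@mkHom (XX K2) (XX K1) res_fun _). intros; apply Xext; intro i; reflexivity. Defined.

Definition preim (k : K2) : option K1 :=
  match excluded_middle_informative (exists i, e i = k) with
  | left H => Some (proj1_sig (constructive_indefinite_description _ H))
  | right _ => None end.

Lemma preim_e i : preim (e i) = Some i.
Proof.
  unfold preim. destruct excluded_middle_informative as [h|h].
  - f_equal. apply ei. apply (proj2_sig (constructive_indefinite_description _ h)).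
  - exfalso; eauto.
Qed.
Lemma preim_some k i : preim k = Some i -> e i = k.
Proof.
  unfold preim. destruct excluded_middle_informative as [h|h]; intro E; inversion E.
  subst. apply (proj2_sig (constructive_indefinite_description _ h)).
Qed.

Definition ext_fun (g : XX K1) : XX K2.
Proof.
  refine (exist _ (fun k => match preim k with Some i => proj1_sig g i | None => zero end) _).
  refine (small_mono _ (proj2_sig g)).
  apply (card_le_of (fun s t => e (proj1_sig t) = proj1_sig s)).
  - intros [k Hk]. simpl in *. destruct (preim k) as [i|] eqn:Ep.
    + exists (exist _ i Hk). simpl. apply preim_some; auto.
    + contradiction.
  - intros s s' t H1 H2. apply sig_eq. congruence.
Defined.

Definition extd : hom (XX K1) (XX K2).
Proof.
  refine (@mkHom (XX K1) (XX K2) ext_fun _). intros x y; apply Xext; intro k; simpl.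
  destruct (preim k); [reflexivity| symmetry; apply add0].
Defined.

Lemma res_ext g : res (extd g) = g.
Proof. apply Xext; intro i. simpl. rewrite preim_e. reflexivity. Qed.
End Res.

Lemma subsingle_small (K : Type) (f : K -> D) :
  (forall s s' : support f, s = s') -> small_supp lam f.
Proof.
  intros H. split.
  - destruct (classic (exists s : support f, True)) as [[s0 _]|N].
    + destruct (classic (exists l : lam, True)) as [[l0 _]|N2].
      * exists (fun _ => l0). intros; apply H.
      * exfalso. apply Hinf. exists 0.
        exists (fun l => False_rect _ (N2 (ex_intro _ l I))). intros l; destruct (N2 (ex_intro _ l I)).
    + exists (fun s => False_rect _ (N (ex_intro _ s I))). intros s; destruct (N (ex_intro _ s I)).
  - intros [u ui]. apply Hinf. exists 1.
    exists (fun _ => exist _ 0 (le_n 1)). intros x y _. apply ui, H.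
Qed.

Definition single_fun (i i' : lam) (g : XX lam) : XX lam.
Proof.
  refine (exist _ (fun k => if excluded_middle_informative (k = i') then proj1_sig g i else zero) _).
  apply subsingle_small. intros [s Hs] [s' Hs']. apply sig_eq; simpl.
  destruct (excluded_middle_informative (s = i')); [|contradiction].
  destruct (excluded_middle_informative (s' = i')); [|contradiction]. congruence.
Defined.

Definition single (i i' : lam) : hom (XX lam) (XX lam).
Proof.
  refine (@mkHom (XX lam) (XX lam) (single_fun i i') _). intros x y; apply Xext; intro k; simpl.
  destruct excluded_middle_informative; [reflexivity| symmetry; apply add0].
Defined.

Lemma single_at (i i' : lam) g : proj1_sig (single i i' g) i' = proj1_sig g i.
Proof. simpl. destruct excluded_middle_informative; [reflexivity|congruence]. Qed.

End Grp.

Section Rho.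
Variables (L : Localization) (D : AbGroup) (lam : Type) (Hinf : infinite lam)
  (Hcl : forall alpha : Type, supp_add_closed D alpha lam).
Notation XX K := (Dsmall D K lam Hinf (@Hcl K)).
Variables (alpha : Type) (e0 : lam -> alpha) (e0i : forall x y, e0 x = e0 y -> x = y)
  (l0 : lam) (HY : is_local L (XX lam)).

Definition Inj := {e : lam -> alpha | forall x y, e x = e y -> x = y}.

Definition G (e : Inj) (xi : Lobj L (XX alpha)) : XX lam :=
  inv_of HY (Lmap L (res Hinf Hcl (proj1_sig e) (proj2_sig e)) xi).

Lemma consist (e e' : Inj) i i' xi : proj1_sig e i = proj1_sig e' i' ->
  proj1_sig (G e xi) i = proj1_sig (G e' xi) i'.
Proof.
  intro E.
  rewrite <- (single_at Hcl i i' (G e xi)).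
  rewrite <- (single_at Hcl i' i' (G e' xi)).
  unfold G. rewrite !inv_nat. rewrite <- !Lcomp.
  f_equal. f_equal. apply (Lmap_ext L). intro f. apply Xext. intro k. simpl.
  destruct excluded_middle_informative; [|reflexivity]. rewrite E. reflexivity.
Qed.

Definition sw (j : alpha) (x : alpha) : alpha :=
  if excluded_middle_informative (x = j) then e0 l0
  else if excluded_middle_informative (x = e0 l0) then j else x.

Lemma sw_inj j x y : sw j x = sw j y -> x = y.
Proof.
  unfold sw. destruct (excluded_middle_informative (x = j));
  destruct (excluded_middle_informative (x = e0 l0));
  destruct (excluded_middle_informative (y = j));
  destruct (excluded_middle_informative (y = e0 l0)); intros; congruence.
Qed.

Lemma sw_l0 j : sw j (e0 l0) = j.
Proof.
  unfold sw. destruct (excluded_middle_informative (e0 l0 = j)); auto.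
  destruct (excluded_middle_informative (e0 l0 = e0 l0)); congruence.
Qed.

Definition ej (j : alpha) : Inj :=
  exist (fun e : lam -> alpha => forall x y, e x = e y -> x = y) (fun i => sw j (e0 i)) (fun x y (E : sw j (e0 x) = sw j (e0 y)) => e0i (@sw_inj j (e0 x) (e0 y) E)).

Definition rho_fun (xi : Lobj L (XX alpha)) (j : alpha) : D := proj1_sig (G (ej j) xi) l0.

Lemma rho_val (e : Inj) i xi : rho_fun xi (proj1_sig e i) = proj1_sig (G e xi) i.
Proof. unfold rho_fun. apply consist. simpl. apply sw_l0. Qed.

Lemma no_big xi : ~ card_le lam (support (rho_fun xi)).
Proof.
  intros [h hi].
  pose (e := exist (fun e : lam -> alpha => forall x y, e x = e y -> x = y)
     (fun l => proj1_sig (h l)) (fun x y E => hi x y (@sig_eq _ _ (h x) (h y) E)) : Inj).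
  pose (g := G e xi).
  apply (proj2 (proj2_sig g)).
  assert (Hn : forall l, proj1_sig g l <> zero).
  { intro l. unfold g. rewrite <- rho_val. exact (proj2_sig (h l)). }
  exists (fun l => exist _ l (Hn l)). intros x y E. exact (f_equal (@proj1_sig _ _) E).
Qed.

Lemma rho_small xi : small_supp lam (rho_fun xi).
Proof.
  split.
  - destruct (comparability (support (rho_fun xi)) lam) as [H|H]; auto.
    exfalso; exact (no_big H).
  - apply no_big.
Qed.

Definition rho : hom (Lobj L (XX alpha)) (XX alpha).
Proof.
  refine (@mkHom (Lobj L (XX alpha)) (XX alpha)
     (fun xi => exist _ (rho_fun xi) (rho_small xi)) _).
  intros x y. apply Xext. intro j. simpl. unfold rho_fun, G.
  rewrite (hom_add (Lmap L _)). rewrite (hom_add (inv_of HY)). reflexivity.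
Defined.

Lemma rho_unit x : rho (unit L _ x) = x.
Proof.
  apply Xext. intro j. simpl. unfold rho_fun, G. rewrite Lnat, inv_l.
  change (proj1_sig x (sw j (e0 l0)) = proj1_sig x j). rewrite sw_l0. reflexivity.
Qed.

Lemma X_local : is_local L (XX alpha).
Proof. exact (local_of_linv L rho rho_unit). Qed.
End Rho.

Theorem lemma1 (L : Localization) (D : AbGroup) (lambda : Type)
  (Hinf : infinite lambda)
  (Hcl : forall alpha : Type, supp_add_closed D alpha lambda)
  (kappa : Type) (Hkl : card_le lambda kappa)
  (Hloc : is_local L (Dsmall D kappa lambda Hinf (Hcl kappa))) :
  forall alpha : Type, card_le lambda alpha ->
    is_local L (Dsmall D alpha lambda Hinf (Hcl alpha)).
Proof.
  intros alpha [e0 e0i].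
  destruct Hkl as [e1 e1i].
  assert (HY : is_local L (Dsmall D lambda lambda Hinf (Hcl lambda))).
  { apply (local_retract Hloc (extd Hinf Hcl e1) (res Hinf Hcl e1 e1i)).
    intro x. apply res_ext. }
  destruct (classic (exists l : lambda, True)) as [[l0 _]|N].
  - exact (@X_local L D lambda Hinf Hcl alpha e0 e0i l0 HY).
  - exfalso. apply Hinf. exists 0.
    exists (fun l => False_rect _ (N (ex_intro _ l I))). intros l; destruct (N (ex_intro _ l I)).
Qed.
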